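(* Let $\mathbb{K}$ be a field and $f=a_0(x)+a_1(x)y+\cdots+a_n(x)y^n\in\mathbb{K}[x,y]$ with $n\geq 2$, $a_0,\ldots,a_n\in\mathbb{K}[x]$, $a_0a_n\neq 0$. Assume that $f$ has no nonconstant factor in $\mathbb{K}[x]$, and let $\nu_0$ and $\nu_n$ be the number of irreducible factors of $a_0(x)$ and $a_n(x)$ in $\mathbb{K}[x]$, respectively, counted with their multiplicities. (i) If $\deg a_0>\max\{\deg a_1,\dots,\deg a_n\}$, then $f$ is a product of at most $\nu_0$ irreducible polynomials over $\mathbb{K}[x]$. (ii) If $\deg a_n>\max\{\deg a_0,\dots,\deg a_{n-1}\}$, then $f$ is a product of at most $\nu_n$ irreducible polynomials over $\mathbb{K}[x]$.
   Context: $f$ is regarded as a polynomial in $y$ with coefficients in $\mathbb{K}[x]$; ''a product of at most $k$ irreducible polynomials over $\mathbb{K}[x]$'' means that in the factorization of $f$ into irreducible elements of $\mathbb{K}[x][y]$ the number of factors, counted with multiplicities, is at most $k$. *)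

(* Defs.v *)
From HB Require Import structures.
From mathcomp Require Import all_boot all_order all_algebra.
Set Implicit Arguments. Unset Strict Implicit. Unset Printing Implicit Defensive.
Import GRing.Theory.
Local Open Scope ring_scope.

Definition irreducible_elt (R : comUnitRingType) (p : R) : Prop :=
  [/\ p != 0, p \isn't a GRing.unit &
      forall a b : R, p = a * b -> a \is a GRing.unit \/ b \is a GRing.unit].

Definition prod_at_most_irr (R : comUnitRingType) (k : nat) (p : R) : Prop :=
  exists s : seq R, [/\ (size s <= k)%N, (forall q, q \in s -> irreducible_elt q)
                     & p = \prod_(q <- s) q].

Definition num_irr_factors (K : fieldType) (a : {poly K}) (m : nat) : Prop :=
  exists c : K, exists s : seq {poly K},
    [/\ c != 0, size s = m, (forall q, q \in s -> irreducible_poly q)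
      & a = c%:P * \prod_(q <- s) q].

Definition no_nonconst_xfactor (K : fieldType) (f : {poly {poly K}}) : Prop :=
  forall (g : {poly K}) (h : {poly {poly K}}), f = g%:P * h -> (size g <= 1)%N.

(* Main.v *)
Require Import Defs.
From HB Require Import structures.
From mathcomp Require Import all_boot all_order all_algebra.
From mathcomp Require Import ring zify.
From Stdlib Require Import Classical.
Import GRing.Theory.
Local Open Scope ring_scope.

Section S.
Variable K : fieldType.

Lemma irr_dvdM (q a b : {poly K}) : irreducible_poly q -> q %| a * b -> (q %| a) || (q %| b).
Proof.
move=> iq qab; have [e|e] := irredp_XsubCP iq (dvdp_gcdl q a).
  have cq : coprimep q a by rewrite coprimep_def (eqp_size e) size_poly1.
  by rewrite (Gauss_dvdpr _ cq) in qab; rewrite qab orbT.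
have : q %| gcdp q a by rewrite (eqp_dvdr _ e) dvdpp.
by move=> /dvdp_trans -> //; rewrite dvdp_gcdr.
Qed.

Lemma irr_dvd_prod (q : {poly K}) (t : seq {poly K}) : irreducible_poly q ->
  q %| \prod_(b <- t) b -> exists2 b, b \in t & q %| b.
Proof.
move=> iq; elim: t => [|b t IH].
  rewrite big_nil dvdp1 => /eqP e; move: iq => [] ; by rewrite e.
rewrite big_cons => /(@irr_dvdM _ _ _ iq) /orP [h|/IH [c ct h]].
  by exists b; rewrite ?mem_head.
by exists c; rewrite // in_cons ct orbT.
Qed.

Lemma uf (s : seq {poly K}) : forall (c : K) (t : seq {poly K}), c != 0 ->
  (forall q, q \in s -> irreducible_poly q) -> (forall b, b \in t -> (1 < size b)%N) ->
  c%:P * \prod_(q <- s) q = \prod_(b <- t) b -> (size t <= size s)%N.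
Proof.
elim: s => [|q s IH] c t cnz Hs Ht.
  rewrite big_nil mulr1; case: t Ht => [//|b t] Ht.
  rewrite big_cons => e.
  have pnz : \prod_(b <- t) b != 0.
    by apply/eqP => h; move: e; rewrite h mulr0 => /eqP; rewrite polyC_eq0 (negPf cnz).
  have bnz : b != 0.
    by apply/eqP => h; move: e; rewrite h mul0r => /eqP; rewrite polyC_eq0 (negPf cnz).
  have := congr1 (fun p : {poly K} => size p) e => /=; rewrite size_polyC cnz size_mul //=.
  have := Ht b (mem_head _ _); have : (0 < size (\prod_(b <- t) b)%R)%N by rewrite size_poly_gt0.
  move=> h1 h2 h3; move: h3; case: (size (\prod_(j <- t) j)%R) h1 => // n _; rewrite addnS /=; case: (size b) h2 => [|[|m]] //.
rewrite big_cons => e.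
have iq : irreducible_poly q by apply: Hs; rewrite mem_head.
have qnz : q != 0 := irredp_neq0 iq.
have : q %| \prod_(b <- t) b by rewrite -e mulrCA dvdp_mulIl.
move=> /(@irr_dvd_prod _ _ iq) [b bt qb].
have e1 : \prod_(b <- t) b = (b %/ q * q) * \prod_(j <- rem b t) j.
  by rewrite (perm_big _ (perm_to_rem bt)) big_cons (divpK qb).
rewrite e1 in e.
set b' := b %/ q in e.
have e2 : c%:P * \prod_(q <- s) q = b' * \prod_(b <- rem b t) b.
  apply: (mulIf qnz); transitivity (c%:P * (q * \prod_(j <- s) j)); first ring. rewrite e; ring.
have Hs' : forall q, q \in s -> irreducible_poly q.
  by move=> r rs; apply: Hs; rewrite in_cons rs orbT.
have szt : size t = (size (rem b t)).+1.
  by rewrite (perm_size (perm_to_rem bt)).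
have Hrem : forall c, c \in rem b t -> (1 < size c)%N.
  by move=> r /mem_rem; apply: Ht.
have [sb|sb] := leqP (size b') 1.
  have db := size1_polyC sb.
  have dnz : b'`_0 != 0.
    apply/eqP => h; move: e2; rewrite db h mul0r => /eqP.
    rewrite mulf_eq0 polyC_eq0 (negPf cnz) /=.
    rewrite prodf_seq_eq0 => /hasP [r rs /= /eqP r0].
    by move: (irredp_neq0 (Hs' r rs)); rewrite r0 eqxx.
  have := IH (c / b'`_0) (rem b t) _ Hs' Hrem.
  rewrite szt /=; apply.
    by rewrite mulf_neq0 // invr_eq0.
  by rewrite polyCM mulrAC e2 {1}db mulrAC -polyCM mulfV // polyC1 mul1r.
rewrite szt; apply: leqW; apply: (IH c (b' :: rem b t) cnz Hs'); last by rewrite big_cons.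
move=> r; rewrite in_cons => /orP [/eqP->//|]; apply: Hrem.
Qed.

Lemma unit_const (g : {poly {poly K}}) : g \is a GRing.unit -> exists2 u : K, u != 0 & g = u%:P%:P.
Proof.
rewrite poly_unitE => /andP [/eqP s1]; rewrite poly_unitE => /andP [/eqP s2 u1].
exists (g`_0`_0); first by rewrite -unitfE.
rewrite {1}(size1_polyC (eq_leq s1)) {1}(size1_polyC (eq_leq s2)) //.
Qed.

Lemma const_unit (u : K) : u != 0 -> (u%:P%:P : {poly {poly K}}) \is a GRing.unit.
Proof.
by move=> unz; rewrite !poly_unitE !size_polyC polyC_eq0 unz /= coefC /= size_polyC unz /= coefC /= unitfE.
Qed.

Lemma irr_scale (u : K) (q : {poly {poly K}}) : u != 0 -> irreducible_elt q ->
  irreducible_elt (u%:P%:P * q).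
Proof.
move=> unz [qnz qnu qirr]; have uu := @const_unit _ unz.
split.
- by rewrite mulf_neq0 // !polyC_eq0.
- by rewrite unitrMr.
- move=> a b e.
  have : q = (u%:P%:P)^-1 * a * b by rewrite -mulrA -e mulKr.
  move=> /qirr [h|h]; last by right.
  by left; rewrite unitrMr ?unitrV // in h.
Qed.

Lemma factor_ex (P : {poly {poly K}} -> Prop)
  (Pmul : forall a b, a * b != 0 -> P (a * b) -> P a /\ P b)
  (Pc : forall g, g != 0 -> P g -> (sizeY g <= 1)%N -> g \is a GRing.unit) :
  forall g, g != 0 -> P g -> exists u, exists s : seq {poly {poly K}},
    [/\ u != 0, g = u%:P%:P * \prod_(q <- s) q & forall q, q \in s -> irreducible_elt q /\ P q].
Proof.
move=> g; have [n] := ubnP (sizeY g); elim: n g => // n IH g Hn gnz Pg.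
have [gi|gni] := classic (irreducible_elt g).
  exists 1, [:: g]; split => //; first by rewrite oner_neq0.
    by rewrite big_seq1 polyC1 polyC1 mul1r.
  by move=> q; rewrite mem_seq1 => /eqP ->.
have [gu|gnu] := boolP (g \is a GRing.unit).
  have [u unz ->] := @unit_const _ gu.
  by exists u, [::]; split => //; rewrite big_nil mulr1.
have [a [b [e au bu]]] : exists a b, [/\ g = a * b, a \isn't a GRing.unit & b \isn't a GRing.unit].
  apply: NNPP => H; apply: gni; split => // a b e; apply: NNPP => H2; apply: H.
  exists a, b; split => //; apply/negP => ?; apply: H2; [left|right] => //.
have gab : a * b != 0 by rewrite -e.
have [Pa Pb] : P a /\ P b by apply: Pmul; rewrite -?e.
have anz : a != 0 by apply/eqP => h; move: gab; rewrite h mul0r eqxx.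
have bnz : b != 0 by apply/eqP => h; move: gab; rewrite h mulr0 eqxx.
have sa : (1 < sizeY a)%N by rewrite ltnNge; apply/negP => h; move/negP: au; apply; apply: Pc.
have sb : (1 < sizeY b)%N by rewrite ltnNge; apply/negP => h; move/negP: bu; apply; apply: Pc.
have sg : sizeY g = (sizeY a + sizeY b).-1.
  by rewrite e !sizeYE rmorphM size_mul // swapXY_eq0.
have [u1 [s1 [u1nz e1 H1]]] := IH a ltac:(lia) anz Pa.
have [u2 [s2 [u2nz e2 H2]]] := IH b ltac:(lia) bnz Pb.
exists (u1 * u2), (s1 ++ s2); split.
- by rewrite mulf_neq0.
- rewrite e e1 e2 big_cat /= !polyCM; ring.
- by move=> q; rewrite mem_cat => /orP [/H1|/H2].
Qed.

Lemma finish (P : {poly {poly K}} -> Prop)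
  (Pmul : forall a b, a * b != 0 -> P (a * b) -> P a /\ P b)
  (Pc : forall g, g != 0 -> P g -> (sizeY g <= 1)%N -> g \is a GRing.unit)
  (phi : {poly {poly K}} -> {poly K})
  (phiM : forall a b, phi (a * b) = phi a * phi b)
  (phiC : forall u, phi (u%:P%:P) = u%:P)
  (Hphi : forall q, irreducible_elt q -> P q -> (1 < size (phi q))%N)
  (f : {poly {poly K}}) (m : nat) :
  f != 0 -> (1 < size f)%N -> P f -> num_irr_factors (phi f) m -> prod_at_most_irr m f.
Proof.
move=> fnz sf Pf [c [s0 [cnz sz Hs0 e0]]].
have [u [s [unz e H]]] := @factor_ex P Pmul Pc f fnz Pf.
have phiP : forall s : seq {poly {poly K}}, phi (\prod_(q <- s) q) = \prod_(q <- s) phi q.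
  elim => [|q s' IH]; first by rewrite !big_nil -[1 in RHS]polyC1 -[1 in LHS]polyC1 -[1 in LHS]polyC1 phiC.
  by rewrite !big_cons phiM IH.
have le : (size s <= m)%N.
  rewrite -sz -(size_map phi s); apply: (@uf s0 (c / u)) => //.
  - by rewrite mulf_neq0 // invr_eq0.
  - by move=> b /mapP [q qs ->]; have [] := H q qs; apply: Hphi.
  - rewrite big_map -phiP polyCM -mulrA mulrCA -e0 e phiM phiC mulrA -polyCM mulVf // polyC1 mul1r //.
case: s e H le => [|q s'] e H le.
  by move: sf; rewrite e big_nil mulr1 size_polyC; case: (_ != 0).
exists ((u%:P%:P * q) :: s'); split => //.
- move=> r; rewrite in_cons => /orP [/eqP ->|rs].
    by apply: irr_scale => //; have [] := H q (mem_head _ _).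
  by have [] := H r; rewrite // in_cons rs orbT.
- by rewrite e !big_cons mulrA.
Qed.

Definition LL (g : {poly {poly K}}) := lead_coef (swapXY g).

Lemma LLM a b : LL (a * b) = LL a * LL b.
Proof. by rewrite /LL rmorphM lead_coefM. Qed.

Lemma LL_coef g j : (LL g)`_j = g`_j`_(sizeY g).-1.
Proof. by rewrite /LL /lead_coef sizeYE coef_swapXY. Qed.

Lemma LL_eq0 g : (LL g == 0) = (g == 0).
Proof. by rewrite /LL lead_coef_eq0 swapXY_eq0. Qed.

Lemma size_LL g : (size (LL g) <= size g)%N.
Proof.
apply/leq_sizeP => j hj; rewrite LL_coef.
by rewrite (nth_default 0 hj) coef0.
Qed.

Lemma coef_neq0_lt (p : {poly K}) i : p`_i != 0 -> (i < size p)%N.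
Proof. by move=> h; rewrite ltnNge; apply: contra h => /leq_sizeP/(_ i (leqnn i)) ->. Qed.

Lemma mup_bound (p : {poly K}) : p != 0 -> (mup 0 p < size p)%N.
Proof.
move=> pnz; have : ('X - 0%:P) ^+ (mup 0 p) %| p by rewrite -mup_geq.
by move=> /(dvdp_leq pnz); rewrite size_exp_XsubC.
Qed.

Definition P1 (g : {poly {poly K}}) := size (LL g) = 1%N.

Lemma Pmul1 a b : a * b != 0 -> P1 (a * b) -> P1 a /\ P1 b.
Proof.
rewrite /P1 mulf_eq0 negb_or => /andP [anz bnz].
have la : (0 < size (LL a))%N by rewrite size_poly_gt0 LL_eq0.
have lb : (0 < size (LL b))%N by rewrite size_poly_gt0 LL_eq0.
rewrite LLM size_mul -?size_poly_gt0 //.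
move: la lb; case: (size (LL a)) => [|[|x]] //; case: (size (LL b)) => [|[|y]] //.
all: by rewrite ?addn0 ?addnS ?addSn.
Qed.

Lemma Pc1 g : g != 0 -> P1 g -> (sizeY g <= 1)%N -> g \is a GRing.unit.
Proof.
move=> gnz; rewrite /P1 => s1 sy.
have s : size (swapXY g) = 1%N.
  apply/eqP; rewrite eqn_leq -sizeYE sy /= lt0n sizeY_eq0 //.
have e1 := size1_polyC (eq_leq s).
have e2 := size1_polyC (eq_leq s1).
have d0 : LL g = (swapXY g)`_0 by rewrite /LL /lead_coef s.
have dnz : (LL g)`_0 != 0.
  by apply/eqP => h; move: s1; rewrite e2 h size_polyC eqxx.
rewrite -(swapXYK g) e1 -d0 e2 swapXY_polyC map_polyC /=.
exact: const_unit.
Qed.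

Lemma Hphi1 q : irreducible_elt q -> P1 q -> (1 < size (q`_0)%R)%N.
Proof.
move=> [qnz qnu _] Pq.
have sy : (1 < sizeY q)%N.
  rewrite ltnNge; apply/negP => h; move/negP: qnu; apply; exact: Pc1.
have : (LL q)`_0 != 0.
  have : lead_coef (LL q) != 0 by rewrite lead_coef_eq0 LL_eq0.
  by rewrite /lead_coef Pq.
rewrite LL_coef => /coef_neq0_lt; move: sy; case: (sizeY q) => [|[|x]] //= _.
exact: leq_ltn_trans.
Qed.

Definition P2 (g : {poly {poly K}}) := g`_0 != 0 /\ mup 0 (LL g) = (size g).-1.

Lemma Pmul2 a b : a * b != 0 -> P2 (a * b) -> P2 a /\ P2 b.
Proof.
rewrite /P2 coef0M mulf_eq0 negb_or => /andP [anz bnz] [/[dup] c0 ].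
rewrite mulf_eq0 negb_or => /andP [a0 b0].
have anz' : a != 0 by apply: contraNneq a0 => ->; rewrite coef0.
have bnz' : b != 0 by apply: contraNneq b0 => ->; rewrite coef0.
rewrite LLM mupM ?LL_eq0 // size_mul //.
have ma : (mup 0 (LL a) < size a)%N.
  by apply: leq_trans (size_LL a); apply: mup_bound; rewrite LL_eq0.
have mb : (mup 0 (LL b) < size b)%N.
  by apply: leq_trans (size_LL b); apply: mup_bound; rewrite LL_eq0.
have sa : (0 < size a)%N by rewrite size_poly_gt0.
have sb : (0 < size b)%N by rewrite size_poly_gt0.
move: ma mb sa sb; move: (mup 0 (LL a)) (mup 0 (LL b)) (size a) (size b) => x y z w.
move=> *; split; split => //; lia.
Qed.

Lemma Pc2 g : g != 0 -> P2 g -> (sizeY g <= 1)%N -> g \is a GRing.unit.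
Proof.
move=> gnz [g0 mg] sy.
have sy1 : sizeY g = 1%N by apply/eqP; rewrite eqn_leq sy lt0n sizeY_eq0.
have s0 : (size (g`_0)%R <= 1)%N by apply: leq_trans (max_size_coefXY _ _) sy.
have e0 := size1_polyC s0.
have g00 : g`_0`_0 != 0 by apply: contraNneq g0 => h; rewrite e0 h.
have nr : ~~ root (LL g) 0 by rewrite /root horner_coef0 LL_coef sy1.
move: mg; rewrite (mupNroot nr) => /esym sg.
have sg1 : (size g <= 1)%N by move: sg; case: (size g) => [|[|]].
rewrite (size1_polyC sg1) e0; exact: const_unit.
Qed.

Lemma Hphi2 q : irreducible_elt q -> P2 q -> (1 < size (lead_coef q))%N.
Proof.
move=> [qnz qnu _] [q0 mq].
have sy : (1 < sizeY q)%N.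
  rewrite ltnNge; apply/negP => h; move/negP: qnu; apply; exact: Pc2.
have Lnz : LL q != 0 by rewrite LL_eq0.
have : ('X - 0%:P) ^+ (size q).-1 %| LL q by rewrite -mup_geq // mq.
move=> /(dvdp_leq Lnz); rewrite size_exp_XsubC prednK ?size_poly_gt0 // => h.
have sL : size (LL q) = size q by apply/eqP; rewrite eqn_leq h size_LL.
have : lead_coef (LL q) != 0 by rewrite lead_coef_eq0.
rewrite {1}/lead_coef sL LL_coef => /coef_neq0_lt.
rewrite /lead_coef; move: sy; case: (sizeY q) => [|[|x]] //= _.
exact: leq_ltn_trans.
Qed.
End S.

Theorem theorem1 (K : fieldType) (f : {poly {poly K}}) (nu0 nun : nat) :
  (3 <= size f)%N ->
  f`_0 * lead_coef f != 0 ->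
  no_nonconst_xfactor f ->
  num_irr_factors f`_0 nu0 ->
  num_irr_factors (lead_coef f) nun ->
  ((forall i : nat, [&& (0 < i)%N & (i < size f)%N] -> (size (f`_i)%R < size (f`_0)%R)%N) ->
     prod_at_most_irr nu0 f)
  /\
  ((forall i : nat, (i < (size f).-1)%N -> (size (f`_i)%R < size (lead_coef f))%N) ->
     prod_at_most_irr nun f).
Proof.
move=> s3 nz _ N0 Nn.
move: (nz); rewrite mulf_eq0 negb_or => /andP [f0 lf].
have fnz : f != 0 by rewrite -lead_coef_eq0.
have sf : (1 < size f)%N by apply: leq_trans s3.
split => H.
- apply: (@finish K (@P1 K) (@Pmul1 K) (@Pc1 K) (fun g => g`_0)) => //.
  + by move=> a b; rewrite coef0M.
  + by move=> u; rewrite coefC.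
  + exact: Hphi1.
  have sY : sizeY f = size f`_0.
    apply/eqP; rewrite eqn_leq max_size_coefXY andbT.
    apply/bigmax_leqP => i _; case: (posnP i) => [->//|ip].
    by apply: ltnW; apply: H; rewrite ip ltn_ord.
  have s0 : (0 < size (f`_0)%R)%N by rewrite size_poly_gt0.
  rewrite /P1; apply/eqP; rewrite eqn_leq lt0n size_poly_eq0 LL_eq0 fnz andbT.
  apply/leq_sizeP => j hj; rewrite LL_coef sY.
  case: (ltnP j (size f)) => hjs; last by rewrite (nth_default 0 hjs) coef0.
  apply: nth_default; move: (H j); rewrite hj hjs => /(_ isT).
  by case: (size f`_0) s0.
- apply: (@finish K (@P2 K) (@Pmul2 K) (@Pc2 K) (@lead_coef _)) => //.
  + exact: lead_coefM.
  + by move=> u; rewrite lead_coefC.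
  + exact: Hphi2.
  have sY : sizeY f = size (lead_coef f).
    apply/eqP; rewrite eqn_leq max_size_lead_coefXY andbT.
    apply/bigmax_leqP => i _.
    have [ip|] := ltnP i (size f).-1; first by apply: ltnW; apply: H.
    move=> h2; have e : (i : nat) = (size f).-1.
      by move: (ltn_ord i) h2; move: (nat_of_ord i) => k; case: (size f) => //= n; lia.
    by rewrite e.
  have sl : (0 < size (lead_coef f))%N by rewrite size_poly_gt0.
  split => //.
  apply/eqP; rewrite eqn_leq; apply/andP; split.
    by rewrite -ltnS prednK ?size_poly_gt0 //; apply: leq_trans (size_LL _ f); apply: mup_bound; rewrite LL_eq0.
  set n := (size f).-1.
  have eL : LL _ f = ((LL _ f)`_n)%:P * 'X^n.
    apply/polyP => j; rewrite coefCM coefXn LL_coef sY.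
    case: (ltngtP j n) => hj; rewrite ?mulr0 ?mulr1 //.
      apply: nth_default; move: (H j hj).
      by case: (size (lead_coef f)) sl.
      have hs : (size f <= j)%N by move: hj; rewrite /n; case: (size f).
      by rewrite (nth_default 0 hs) coef0.
    by rewrite hj LL_coef sY.
  rewrite mup_geq ?LL_eq0 // polyC0 subr0 eL; apply: dvdp_mull; exact: dvdpp.
Qed.
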